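(* Let $J\ge2$, $\iota_1,\dots,\iota_J\in\{\pm1\}$ and distinct $z_1^*,\dots,z_J^*\in\mathbb{R}^N$. If $\#\{i:\iota_i=+1\}\le1$ or $\#\{i:\iota_i=-1\}\le1$, then the configuration $\{(\iota_1,z_1^* ),\dots,(\iota_J,z_J^* )\}$ is totally non-degenerate. In particular, any degenerate configuration has at least two positive signs and two negative signs, so $J\ge4$.
   Context: $N\ge7$. $A^*_{ij}=\mathbf 1_{i\ne j}\kappa_0\kappa_\infty\frac{\iota_i\iota_j}{|z_i^*-z_j^*|^{N-2}}$ with fixed positive constants $\kappa_0,\kappa_\infty$. A configuration (of size $\ge2$) is non-degenerate if $A^*$ has no nonzero kernel element in $[0,\infty)^J$, degenerate otherwise; it is totally non-degenerate if every sub-configuration $\{(\iota_i,z_i^* ):i\in\mathcal I\}$ with $|\mathcal I|\ge2$ is non-degenerate (with the corresponding submatrix of $A^*$). *)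

(* Defs.v *)
From HB Require Import structures.
From mathcomp Require Import all_boot all_order all_algebra.
From mathcomp Require Import reals.
Set Implicit Arguments. Unset Strict Implicit. Unset Printing Implicit Defensive.
Import Order.TTheory GRing.Theory Num.Theory.
Local Open Scope ring_scope.

Definition edist (R : realType) (N : nat) (u v : 'rV[R]_N) : R :=
  Num.sqrt (\sum_(k < N) (u 0 k - v 0 k) ^+ 2).

Definition Amat (R : realType) (N J : nat) (k0 kinf : R)
    (iota : 'I_J -> R) (z : 'I_J -> 'rV[R]_N) : 'M[R]_J :=
  \matrix_(i, j) (if i != j then
      k0 * kinf * iota i * iota j / (edist (z i) (z j)) ^+ (N - 2)
    else 0).

Definition conf_nondegenerate (R : realType) (N J : nat) (k0 kinf : R)
    (iota : 'I_J -> R) (z : 'I_J -> 'rV[R]_N) : Prop :=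
  ~ (exists x : 'cV[R]_J,
       [/\ x != 0, (forall i, 0 <= x i 0) & Amat k0 kinf iota z *m x = 0]).

Definition subconf_iota (R : realType) (J : nat) (I : {set 'I_J})
    (iota : 'I_J -> R) : 'I_#|I| -> R := fun a => iota (enum_val a).
Definition subconf_z (R : realType) (N J : nat) (I : {set 'I_J})
    (z : 'I_J -> 'rV[R]_N) : 'I_#|I| -> 'rV[R]_N := fun a => z (enum_val a).

Definition conf_totally_nondegenerate (R : realType) (N J : nat) (k0 kinf : R)
    (iota : 'I_J -> R) (z : 'I_J -> 'rV[R]_N) : Prop :=
  forall I : {set 'I_J}, (2 <= #|I|)%N ->
    conf_nondegenerate k0 kinf (@subconf_iota R J I iota) (@subconf_z R N J I z).

Definition npos (R : realType) (J : nat) (iota : 'I_J -> R) : nat :=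
  #|[set i | iota i == 1]|.
Definition nneg (R : realType) (J : nat) (iota : 'I_J -> R) : nat :=
  #|[set i | iota i == -1]|.

(* Main.v *)
Require Import Defs.
From HB Require Import structures.
From mathcomp Require Import all_boot all_order all_algebra.
From mathcomp Require Import reals.
From mathcomp Require Import zify ring lra.
Import Order.TTheory GRing.Theory Num.Theory.
Local Open Scope ring_scope.

Lemma edist_gt0 (R : realType) (N : nat) (u v : 'rV[R]_N) :
  u != v -> 0 < edist u v.
Proof.
move=> uv; rewrite /edist sqrtr_gt0 lt_def sumr_ge0 ?andbT; last first.
  by move=> k _; exact: sqr_ge0.
apply/negP => /eqP/psumr_eq0P H; have {}H := H (fun k _ => sqr_ge0 _); move/negP: uv; apply; apply/eqP/matrixP => a k.
rewrite ord1; have := H k isT => /eqP; rewrite sqrf_eq0 subr_eq0.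
by move/eqP.
Qed.

Lemma core (R : realType) (N J : nat) (k0 kinf t : R)
    (iota : 'I_J -> R) (z : 'I_J -> 'rV[R]_N) (i : 'I_J) :
  0 < k0 -> 0 < kinf -> (2 <= J)%N -> (t = 1 \/ t = -1) ->
  (forall j, iota j = 1 \/ iota j = -1) -> injective z ->
  (forall j, j != i -> iota j = t) ->
  conf_nondegenerate k0 kinf iota z.
Proof.
move=> k0p kp J2 ht hio zinj hi [x [xn0 xge Ax]].
have c0 : 0 < k0 * kinf by rewrite mulr_gt0.
have sq1 : forall s : R, s = 1 \/ s = -1 -> s * s = 1.
  by move=> s [->|->]; rewrite ?mulr1 ?mulrNN ?mulr1.
have nz1 : forall s : R, s = 1 \/ s = -1 -> s != 0.
  by move=> s [->|->]; rewrite ?oppr_eq0 oner_eq0.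
have dpos : forall a b, a != b -> 0 < edist (z a) (z b) ^+ (N - 2).
  move=> a b ab; apply: exprn_gt0; apply: edist_gt0.
  by apply/negP => /eqP /zinj /eqP; apply/negP.
have step1 : forall j, j != i -> x j 0 = 0.
  have row := congr1 (fun M : 'cV[R]_J => M i 0) Ax.
  rewrite /= !mxE in row.
  have : \sum_j (iota i * t) * ((Amat k0 kinf iota z) i j * x j 0) = 0.
    by rewrite -mulr_sumr row mulr0.
  have term : forall j, (iota i * t) * ((Amat k0 kinf iota z) i j * x j 0)
      = if i != j then k0 * kinf * x j 0 / edist (z i) (z j) ^+ (N - 2) else 0.
    move=> j; rewrite mxE; case: ifP => ij; last by rewrite mul0r mulr0.
    rewrite (hi j); last by rewrite eq_sym.
    have e1 := sq1 _ (hio i); have e2 := sq1 _ ht.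
    transitivity ((iota i * iota i) * (t * t) * (k0 * kinf * x j 0 / edist (z i) (z j) ^+ (N - 2))).
      ring.
    by rewrite e1 e2 !mul1r.
  move/psumr_eq0P => H j ji.
  have : (iota i * t) * ((Amat k0 kinf iota z) i j * x j 0) = 0.
    apply: H => // k _; rewrite term; case: ifP => ik //.
    apply: divr_ge0; first by rewrite mulr_ge0 // ltW.
    by apply: ltW; apply: dpos.
  rewrite term eq_sym ji => /eqP; rewrite mulf_eq0 invr_eq0 (gt_eqF (dpos _ _ _)).
    by rewrite orbF mulf_eq0 (gt_eqF c0) /= => /eqP.
  by rewrite eq_sym.
have [k ki] : exists k : 'I_J, k != i.
  have lt : ((if val i == 0%N then 1 else 0) < J)%N by case: ifP => _; lia.
  exists (Ordinal lt); apply/negP => /eqP /(congr1 val) /=.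
  by case: ifP => /eqP; lia.
have row := congr1 (fun M : 'cV[R]_J => M k 0) Ax.
rewrite /= !mxE (bigD1 i) //= big1 ?addr0 in row; last first.
  by move=> j ji; rewrite step1 // mulr0.
move: row; rewrite mxE ki => /eqP; rewrite mulf_eq0 => /orP [|/eqP xi0].
  rewrite mulf_eq0 invr_eq0 (gt_eqF (dpos _ _ ki)) orbF !mulf_eq0 (gt_eqF k0p) (gt_eqF kp).
  by rewrite (negbTE (nz1 _ (hio k))) (negbTE (nz1 _ (hio i))).
move/eqP: xn0; apply; apply/matrixP => a b; rewrite ord1 mxE.
by case: (eqVneq a i) => [->//|ai]; rewrite step1.
Qed.

Lemma core2 (R : realType) (N J : nat) (k0 kinf t : R)
    (iota : 'I_J -> R) (z : 'I_J -> 'rV[R]_N) :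
  0 < k0 -> 0 < kinf -> (2 <= J)%N -> (t = 1 \/ t = -1) ->
  (forall j, iota j = 1 \/ iota j = -1) -> injective z ->
  (#|[set j | iota j != t]| <= 1)%N ->
  conf_nondegenerate k0 kinf iota z.
Proof.
move=> k0p kp J2 ht hio zinj /card_le1_eqP H.
have J0 : (0 < J)%N by lia.
case: (pickP [pred j | iota j != t]) => [p /= pS|none].
  apply: (@core R N J k0 kinf t iota z p) => // j jp; apply/eqP; apply/negPn/negP => jS.
  have := H j p; rewrite !inE => /(_ jS pS) ej.
  by rewrite ej eqxx in jp.
apply: (@core R N J k0 kinf t iota z (Ordinal J0)) => // j _.
by have := none j => /= /negbFE /eqP.
Qed.

Lemma card_pre (J M : nat) (f : 'I_M -> 'I_J) (P : pred 'I_J) :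
  injective f -> (#|[set a | P (f a)]| <= #|[set j | P j]|)%N.
Proof.
move=> finj; rewrite -(card_imset _ finj); apply: subset_leq_card.
by apply/subsetP => j /imsetP [a]; rewrite !inE => Pa ->.
Qed.

Lemma one_neq_m1 (R : realType) : (1 : R) != -1.
Proof. by rewrite gt_eqF //; lra. Qed.

Lemma pos_neg {R : realType} {J : nat} (iota : 'I_J -> R) :
  (forall j, iota j = 1 \/ iota j = -1) ->
  [set j | iota j != -1] = [set j | iota j == 1] /\
  [set j | iota j != 1] = [set j | iota j == -1].
Proof.
move=> hio; split; apply/setP => j; rewrite !inE; case: (hio j) => ->;
  by rewrite ?eqxx ?one_neq_m1 ?(negbTE (one_neq_m1 R)) // eq_sym ?(negbTE (one_neq_m1 R)).
Qed.

Lemma nondeg_of (R : realType) (N J : nat) (k0 kinf : R)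
    (iota : 'I_J -> R) (z : 'I_J -> 'rV[R]_N) :
  0 < k0 -> 0 < kinf -> (2 <= J)%N ->
  (forall j, iota j = 1 \/ iota j = -1) -> injective z ->
  (npos iota <= 1)%N \/ (nneg iota <= 1)%N ->
  conf_nondegenerate k0 kinf iota z.
Proof.
move=> k0p kp J2 hio zinj; have [e1 e2] := @pos_neg R J iota hio.
case=> h.
  by apply: (@core2 R N J k0 kinf (-1)) => //; [right | rewrite e1].
by apply: (@core2 R N J k0 kinf 1) => //; [left | rewrite e2].
Qed.

Theorem lemma4p4 (R : realType) (N J : nat) (k0 kinf : R)
    (iota : 'I_J -> R) (z : 'I_J -> 'rV[R]_N) :
  (7 <= N)%N -> 0 < k0 -> 0 < kinf -> (2 <= J)%N ->
  (forall i, iota i = 1 \/ iota i = -1) ->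
  injective z ->
  ((npos iota <= 1)%N \/ (nneg iota <= 1)%N ->
     conf_totally_nondegenerate k0 kinf iota z)
  /\
  (~ conf_nondegenerate k0 kinf iota z ->
     [/\ (2 <= npos iota)%N,
         (2 <= nneg iota)%N & (4 <= J)%N]).
Proof.
move=> N7 k0p kp J2 hio zinj; split.
  move=> h I I2; apply: nondeg_of => //.
  - by move=> a; apply: hio.
  - by move=> a b /zinj /enum_val_inj.
  case: h => h; [left|right]; apply: leq_trans h;
    exact: (@card_pre J _ _ (fun j => iota j == _) (@enum_val_inj _ _)).
move=> nd.
have h1 : (2 <= npos iota)%N.
  by rewrite leqNgt; apply/negP => h; apply: nd; apply: nondeg_of => //; left.
have h2 : (2 <= nneg iota)%N.
  by rewrite leqNgt; apply/negP => h; apply: nd; apply: nondeg_of => //; right.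
split => //.
have := cardsU [set i | iota i == 1] [set i | iota i == -1].
have -> : [set i | iota i == 1] :&: [set i | iota i == -1] = set0.
  apply/setP => j; rewrite !inE; apply/negP => /andP [/eqP -> ].
  by rewrite (negbTE (one_neq_m1 R)).
rewrite cards0 => e.
have hc := max_card (mem ([set i | iota i == 1] :|: [set i | iota i == -1])).
rewrite card_ord in hc.
rewrite -/(npos iota) -/(nneg iota) subn0 in e.
move: hc; rewrite e; lia.
Qed.
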